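(* Let $k\ge 1$ and $n\ge k+1$ be integers. The minimum of ${\rm dc}(G)$ over all $k$-connected graphs $G$ of order $n$ equals $\min\{n,3k+2\}$. That is, every $k$-connected graph $G$ of order $n$ satisfies ${\rm dc}(G)\ge \min\{n,3k+2\}$, and some $k$-connected graph of order $n$ attains equality.
   Context: All graphs are finite and simple. A detour of a graph is a longest path in it. The detour covering number ${\rm dc}(G)$ is the number of vertices of $G$ that lie in at least one detour. *)

(* Defs.v *)
From mathcomp Require Import all_boot.
From mathcomp Require Import boolp.
Set Implicit Arguments. Unset Strict Implicit. Unset Printing Implicit Defensive.

Definition simple_graph (T : finType) (e : rel T) : Prop :=
  symmetric e /\ irreflexive e.

Definition is_gpath (T : finType) (e : rel T) (p : seq T) : bool :=
  match p with
  | [::] => false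
  | x :: q => path e x q && uniq p
  end.

Definition detour (T : finType) (e : rel T) (p : seq T) : Prop :=
  is_gpath e p /\ forall q : seq T, is_gpath e q -> size q <= size p.

Definition dc (T : finType) (e : rel T) : nat :=
  #|[set v : T | `[< exists p : seq T, detour e p /\ v \in p >]]|.

Definition del_rel (T : finType) (e : rel T) (S : {set T}) : rel T :=
  [rel x y | [&& e x y, x \notin S & y \notin S]].

Definition k_connected (T : finType) (e : rel T) (k : nat) : Prop :=
  k < #|T| /\
  forall S : {set T}, #|S| < k ->
    forall x y : T, x \notin S -> y \notin S -> connect (del_rel e S) x y.

(* Main.v *)
Require Import Defs.
From mathcomp Require Import all_boot boolp zify.
Set Implicit Arguments. Unset Strict Implicit. Unset Printing Implicit Defensive.

Lemma gpathE (T : finType) (e : rel T) p :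
  is_gpath e p = (p != [::]) && sorted e p && uniq p.
Proof. by case: p. Qed.

Lemma gpath_size_le (T : finType) (e : rel T) p : is_gpath e p -> size p <= #|T|.
Proof. rewrite gpathE => /andP [_ /card_uniqP <-]; exact: max_card. Qed.

Lemma detour_exists (T : finType) (e : rel T) (x : T) : exists p, detour e p.
Proof.
  pose P := fun m => `[< exists p, is_gpath e p /\ size p = m >].
  have exP : exists m, P m by exists 1; apply/asboolP; exists [:: x].
  have ubP : forall m, P m -> m <= #|T|.
    move=> m; rewrite /P => /asboolP [p [gp <-]]. exact: (gpath_size_le gp).
  case: (ex_maxnP exP ubP) => m; rewrite /P => /asboolP [p [gp sz]] mx.
  exists p; split=> // q gq; rewrite sz; apply: mx; apply/asboolP; by exists q.
Qed.

Lemma connect_closed (T : finType) (r : rel T) (C : pred T) u v :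
  C u -> (forall x y, C x -> r x y -> C y) -> connect r u v -> C v.
Proof.
  move=> Cu cl /connectP [p pth ->]; elim: p u Cu pth => //= y p IH u Cu /andP [ruy pth].
  exact: IH (cl _ _ Cu ruy) pth.
Qed.

Lemma del_path (T : finType) (e : rel T) S c q :
  path (del_rel e S) c q -> path e c q && all (fun x => x \notin S) q.
Proof.
  elim: q c => //= y q IH c /andP [/and3P [ecy _ yS] /IH /andP [pq aq]].
  by rewrite ecy pq yS aq.
Qed.

Lemma gpath_rev (T : finType) (e : rel T) p :
  symmetric e -> is_gpath e (rev p) = is_gpath e p.
Proof.
  move=> sym; rewrite !gpathE rev_uniq rev_sorted.
  have -> : sorted (fun z => e^~ z) p = sorted e p.
    case: p => //= x p; apply: eq_path => a b; exact: sym.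
  by rewrite -size_eq0 size_rev size_eq0.
Qed.

Lemma detour_rev (T : finType) (e : rel T) p :
  symmetric e -> detour e p -> detour e (rev p).
Proof. by move=> sym [gp mx]; split; [rewrite gpath_rev | rewrite size_rev]. Qed.

Lemma gpath_splice (T : finType) (e : rel T) s1 x m z s2 c q :
  is_gpath e (s1 ++ x :: m ++ z :: s2) -> path e c q -> uniq (c :: q) ->
  all (fun w => w \notin (s1 ++ x :: m ++ z :: s2)) (c :: q) ->
  e x c -> e (last c q) z ->
  is_gpath e (s1 ++ x :: (c :: q) ++ z :: s2).
Proof.
  rewrite !gpathE => /andP [/andP [_ so] un] pq ucq allq exc elz.
  apply/andP; split; first (apply/andP; split).
  - by case: s1 {so un allq}.
  - move: so; rewrite !sorted_cat_cons => /andP [-> /=].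
    rewrite cat_path => /andP [_ /= /andP [_ ps2]].
    by rewrite exc cat_path pq /= elz ps2.
  - have -> : s1 ++ x :: (c :: q) ++ z :: s2 = (rcons s1 x) ++ (c :: q) ++ (z :: s2).
      by rewrite -cats1 -catA.
    have pe : perm_eq (rcons s1 x ++ (c::q) ++ z::s2) ((c::q) ++ rcons s1 x ++ z::s2).
      by apply/permPl; exact: perm_catCA.
    rewrite (perm_uniq pe) cat_uniq ucq /=.
    have un' : uniq (rcons s1 x ++ z :: s2).
      apply: subseq_uniq un; rewrite -cats1 -catA /=.
      apply: cat_subseq (subseq_refl _) _; rewrite /= eqxx.
      exact: suffix_subseq.
    rewrite un' andbT; apply/hasPn => w wS; apply/negP => wc.
    move/allP: allq => /(_ w wc); rewrite mem_cat in wS.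
    rewrite !mem_cat in_cons mem_cat in_cons.
    move: wS; rewrite mem_rcons !in_cons => /orP [/orP [/eqP ->|->]|/orP [/eqP ->|->]];
      by rewrite ?eqxx ?orbT.
Qed.

Lemma gap_count_r (T : eqType) (a : pred T) (s : seq T) :
  (forall s1 x s2, s = s1 ++ x :: s2 -> a x -> 2 <= size s2) ->
  (forall s1 x y s2, s = s1 ++ x :: y :: s2 -> a x -> ~~ a y) ->
  (forall s1 x y z s2, s = s1 ++ x :: y :: z :: s2 -> a x -> ~~ a z) ->
  3 * count a s <= size s.
Proof.
  move: {2}(size s) (leqnn (size s)) => N; elim: N s => [|N IH] s.
    by rewrite leqn0 => /nilP ->.
  case: s => [|x s] //= szs H1 H2 H3.
  case ax: (a x) => /=; last first.
    rewrite add0n; apply: leq_trans (IH s _ _ _ _) _ => //.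
    - move=> s1 y s2 E; apply: (H1 (x :: s1)); by rewrite E.
    - move=> s1 y z s2 E; apply: (H2 (x :: s1)); by rewrite E.
    - move=> s1 y z w s2 E; apply: (H3 (x :: s1)); by rewrite E.
  have := H1 [::] x s erefl ax.
  case: s szs H1 H2 H3 => [|y [|z s]] //= szs H1 H2 H3 _.
  have ny := H2 [::] x y (z :: s) erefl ax.
  have nz := H3 [::] x y z s erefl ax.
  rewrite (negbTE ny) (negbTE nz) /=.
  have := IH s _ _ _ _.
  have hs : size s <= N by lia.
  move=> /(_ hs) H.
  have : 3 * count a s <= size s.
    apply: H.
    - move=> s1 w s2 E; apply: (H1 [:: x, y, z & s1]); by rewrite E.
    - move=> s1 w v s2 E; apply: (H2 [:: x, y, z & s1]); by rewrite E.
    - move=> s1 w v t s2 E; apply: (H3 [:: x, y, z & s1]); by rewrite E.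
  lia.
Qed.

Lemma gap_count (T : eqType) (a : pred T) (s : seq T) :
  (forall s1 x s2, s = s1 ++ x :: s2 -> a x -> 2 <= size s1 /\ 2 <= size s2) ->
  (forall s1 x y s2, s = s1 ++ x :: y :: s2 -> a x -> ~~ a y) ->
  (forall s1 x y z s2, s = s1 ++ x :: y :: z :: s2 -> a x -> ~~ a z) ->
  0 < count a s -> 3 * count a s + 2 <= size s.
Proof.
  move=> H1 H2 H3.
  have nx1 : forall x s', s = x :: s' -> ~~ a x.
    by move=> x s' E; apply/negP => ax; have [] := H1 [::] x s' E ax.
  have nx2 : forall x y s', s = x :: y :: s' -> ~~ a y.
    by move=> x y s' E; apply/negP => ay; have [] := H1 [:: x] y s' E ay.
  case E: s => [|x [|y t]] //=.
    by rewrite (negbTE (nx1 _ _ E)).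
  rewrite (negbTE (nx1 _ _ E)) (negbTE (nx2 _ _ _ E)) /= => ct.
  have : 3 * count a t <= size t.
    apply: gap_count_r.
    - move=> s1 w s2 E' aw; apply: (proj2 (H1 [:: x, y & s1] w s2 _ aw)); by rewrite E E'.
    - move=> s1 w v s2 E'; apply: (H2 [:: x, y & s1]); by rewrite E E'.
    - move=> s1 w v r s2 E'; apply: (H3 [:: x, y & s1]); by rewrite E E'.
  lia.
Qed.

Definition Cset (T : finType) (e : rel T) (u : T) (p : seq T) : {set T} :=
  [set v | connect (del_rel e [set x in p]) u v].
Definition Aset (T : finType) (e : rel T) (u : T) (p : seq T) (x : T) : bool :=
  [exists c in Cset e u p, e x c].

Lemma C_notin (T : finType) (e : rel T) u p v :
  u \notin p -> v \in Cset e u p -> v \notin p.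
Proof.
  move=> up; rewrite inE; apply: (connect_closed (C := fun v => v \notin p)) => //.
  by move=> x y _ /and3P [_ _]; rewrite inE.
Qed.

Lemma C_step (T : finType) (e : rel T) u p v w :
  u \notin p -> v \in Cset e u p -> e v w -> w \notin p -> w \in Cset e u p.
Proof.
  move=> up vC evw wp; have vp := C_notin up vC.
  move: vC; rewrite !inE => cv; apply: connect_trans cv (connect1 _).
  by rewrite /del_rel /= evw !inE vp wp.
Qed.

Lemma del_rel_sym (T : finType) (e : rel T) S : symmetric e -> symmetric (del_rel e S).
Proof. by move=> sym x y; rewrite /del_rel /= sym; case: (e y x); case: (x \in S); case: (y \in S). Qed.

Lemma C_path (T : finType) (e : rel T) u p c c' :
  symmetric e -> u \notin p -> c \in Cset e u p -> c' \in Cset e u p ->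
  exists q, [/\ path e c q, last c q = c', uniq (c :: q) & all (fun w => w \notin p) (c :: q)].
Proof.
  move=> sym up cC c'C; have cp := C_notin up cC.
  have cc' : connect (del_rel e [set x in p]) c c'.
    move: cC c'C; rewrite !inE => uc uc'; apply: connect_trans uc'.
    by rewrite (sym_connect_sym (del_rel_sym _ sym)).
  case/connectP: cc' => q0 pq0 ->.
  case: (shortenP pq0) => q pq uq _.
  move/del_path: pq => /andP [pq aq].
  exists q; split=> //=; rewrite cp /=.
  by apply/allP => w /(allP aq); rewrite inE.
Qed.

Lemma Cset_rev (T : finType) (e : rel T) u p : Cset e u (rev p) = Cset e u p.
Proof.
  rewrite /Cset; have -> : [set x in rev p] = [set x in p] by apply/setP => w; rewrite !inE mem_rev.
  by [].
Qed.

Lemma Aset_rev (T : finType) (e : rel T) u p x : Aset e u (rev p) x = Aset e u p x.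
Proof. by rewrite /Aset Cset_rev. Qed.

Lemma no_ext (T : finType) (e : rel T) x s v :
  detour e (x :: s) -> v \notin x :: s -> ~~ e v x.
Proof.
  move=> [gp mx] vn; apply/negP => evx.
  have : is_gpath e (v :: x :: s).
    move: gp; rewrite /is_gpath /= => /andP [ps us]; by rewrite evx ps vn us.
  by move/mx => /=; rewrite ltnn.
Qed.

Lemma C_smaller (T : finType) (e : rel T) u P P' c :
  (forall p, detour e p -> u \notin p) ->
  detour e P -> detour e P' -> c \in Cset e u P -> c \in P' ->
  (forall w v, w \in P -> w \notin P' -> v \in Cset e u P -> ~~ e v w) ->
  #|Cset e u P'| < #|Cset e u P|.
Proof.
  move=> unc dP dP' cC cP' hyp.
  have uP := unc _ dP; have uP' := unc _ dP'.
  apply: proper_card; apply/properP; split.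
    apply/subsetP => v; rewrite [v \in Cset e u P']inE.
    apply: (connect_closed (C := fun v => v \in Cset e u P)).
      by rewrite inE connect0.
    move=> x y xC /and3P [exy _]; rewrite inE => yP'.
    case yP: (y \in P); last by apply: C_step xC exy _; rewrite ?yP.
    by move: (hyp y x yP yP' xC); rewrite exy.
  exists c => //; apply/negP => /(C_notin uP'); by rewrite cP'.
Qed.

Definition minimal (T : finType) (e : rel T) (u : T) (P : seq T) :=
  detour e P /\ forall P', detour e P' -> #|Cset e u P| <= #|Cset e u P'|.

Lemma minimal_rev (T : finType) (e : rel T) u P :
  symmetric e -> minimal e u P -> minimal e u (rev P).
Proof.
  move=> sym [dP mn]; split; first exact: detour_rev.
  by move=> P' /mn; rewrite Cset_rev.
Qed.

Lemma Hleft (T : finType) (e : rel T) u P s1 x s2 :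
  symmetric e -> (forall p, detour e p -> u \notin p) ->
  minimal e u P -> P = s1 ++ x :: s2 -> Aset e u P x -> 2 <= size s1.
Proof.
  move=> sym unc [dP mn] EP /existsP [c /andP [cC exc]].
  have uP := unc _ dP; have cP := C_notin uP cC.
  case: s1 EP => [|y [|z s1]] EP //=.
  - rewrite /= in EP; subst P.
    by have := no_ext dP cP; rewrite sym exc.
  - rewrite /= in EP; subst P.
    have gP'' : is_gpath e (c :: x :: s2).
      case: dP => gp _; move: gp cP; rewrite /is_gpath /= !in_cons.
      move=> /andP [/andP [_ ps] /andP [_ us]] /norP [_ cn].
      by rewrite sym exc ps us cn andbT.
    have dP'' : detour e (c :: x :: s2).
      by split=> // q /(proj2 dP).
    have lt : #|Cset e u (c :: x :: s2)| < #|Cset e u [:: y, x & s2]|.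
      apply: (C_smaller unc dP dP'' cC (mem_head _ _)).
      move=> w v; rewrite !in_cons => /orP [/eqP -> _ vC|wP]; last first.
        by move: wP => /orP [->|->]; rewrite ?orbT.
      exact: (no_ext dP (C_notin uP vC)).
    by move: (mn _ dP''); rewrite leqNgt lt.
Qed.

Lemma H2l (T : finType) (e : rel T) u P s1 x y s2 :
  symmetric e -> (forall p, detour e p -> u \notin p) ->
  minimal e u P -> P = s1 ++ x :: y :: s2 -> Aset e u P x -> ~~ Aset e u P y.
Proof.
  move=> sym unc [dP mn] EP /existsP [c /andP [cC exc]].
  apply/negP => /existsP [c' /andP [c'C eyc']].
  have uP := unc _ dP.
  have [q [pq lq uq aq]] := C_path sym uP cC c'C.
  have g : is_gpath e (s1 ++ x :: (c :: q) ++ y :: s2).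
    apply: (@gpath_splice _ e s1 x [::] y s2 c q) => //=.
    - by rewrite -EP; case: dP.
    - by rewrite -EP.
    - by rewrite lq sym.
  have := proj2 dP _ g; rewrite EP !size_cat /= !size_cat /=; lia.
Qed.

Lemma H3l (T : finType) (e : rel T) u P s1 x y z s2 :
  symmetric e -> (forall p, detour e p -> u \notin p) ->
  minimal e u P -> P = s1 ++ x :: y :: z :: s2 -> Aset e u P x -> ~~ Aset e u P z.
Proof.
  move=> sym unc mP EP Ax; have [dP mn] := mP.
  move: (Ax) => /existsP [c /andP [cC exc]].
  apply/negP => /existsP [c' /andP [c'C ezc']].
  have uP := unc _ dP.
  have [q [pq lq uq aq]] := C_path sym uP cC c'C.
  have g : is_gpath e (s1 ++ x :: (c :: q) ++ z :: s2).
    apply: (@gpath_splice _ e s1 x [:: y] z s2 c q) => //=.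
    - by rewrite -EP; case: dP.
    - by rewrite -EP.
    - by rewrite lq sym.
  have := proj2 dP _ g; rewrite EP !size_cat /= !size_cat /= => szq.
  have q0 : q = [::] by case: q {pq lq uq aq g} szq => //= ? ?; lia.
  subst q; rewrite /= in lq; subst c'.
  have dP' : detour e (s1 ++ x :: c :: z :: s2).
    split; first exact: g. by move=> r /(proj2 dP); rewrite EP !size_cat.
  have lt : #|Cset e u (s1 ++ x :: c :: z :: s2)| < #|Cset e u P|.
    apply: (C_smaller unc dP dP' cC).
      by rewrite mem_cat; apply/orP; right; rewrite in_cons; apply/orP; right; exact: mem_head.
    move=> w v; rewrite EP !mem_cat !in_cons => wP wP' vC.
    have wy : w = y.
      move: wP' => /norP [n1 /norP [n2 /norP [_ /norP [n4 n5]]]].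
      by move: wP; rewrite (negbTE n1) (negbTE n2) (negbTE n4) (negbTE n5) /= orbF => /eqP.
    subst w; apply/negP => evy.
    have Ay : Aset e u P y by apply/existsP; exists v; rewrite EP vC sym evy.
    by move: (H2l sym unc mP EP Ax); rewrite Ay.
  by move: (mn _ dP'); rewrite leqNgt lt.
Qed.

Lemma main_bound (T : finType) (e : rel T) u P k :
  simple_graph e -> (forall p, detour e p -> u \notin p) ->
  minimal e u P -> k_connected e k -> 1 <= k -> 3 * k + 2 <= size P.
Proof.
  move=> [sym irr] unc mP [kn kc] k1.
  have dP := mP.1; have uP := unc _ dP.
  set A := Aset e u P.
  have HL : forall s1 x s2, P = s1 ++ x :: s2 -> A x -> 2 <= size s1.
    by move=> s1 x s2 E ax; apply: (Hleft sym unc mP E ax).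
  have HR : forall s1 x s2, P = s1 ++ x :: s2 -> A x -> 2 <= size s2.
    move=> s1 x s2 E ax.
    have E' : rev P = rev s2 ++ x :: rev s1 by rewrite E rev_cat rev_cons cat_rcons.
    rewrite -size_rev; apply: (Hleft sym unc (minimal_rev sym mP) E').
    by rewrite Aset_rev.
  have cnt : 0 < count A P -> 3 * count A P + 2 <= size P.
    apply: gap_count.
    - by move=> s1 x s2 E ax; split; [exact: HL E ax | exact: HR E ax].
    - by move=> s1 x y s2 E ax; apply: (H2l sym unc mP E ax).
    - by move=> s1 x y z s2 E ax; apply: (H3l sym unc mP E ax).
  have kX : k <= count A P.
    rewrite leqNgt; apply/negP => lt.
    set X := [set w in P | A w].
    have uPP : uniq P by case: dP => /=; rewrite gpathE => /andP [].
    have cX : #|X| = count A P.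
      rewrite -size_filter; have /card_uniqP <- := filter_uniq A uPP.
      by apply: eq_card => w; rewrite !inE mem_filter andbC.
    case EP: P => [|p1 s].
      by move: dP; rewrite EP => -[].
    have p1X : p1 \notin X.
      rewrite inE EP mem_head /=; apply/negP => ap1.
      by have := HL [::] p1 s EP ap1.
    have uX : u \notin X by rewrite inE (negbTE uP).
    have cXk : #|X| < k by rewrite cX.
    have := kc X cXk u p1 uX p1X.
    move/(connect_closed (C := fun v => v \in Cset e u P)) => H.
    have : p1 \in Cset e u P.
      apply: H; first by rewrite inE connect0.
      move=> a b aC /and3P [eab _ bX].
      case bP: (b \in P); last by apply: C_step aC eab _; rewrite ?bP.
      exfalso; move: bX; rewrite inE bP /=; apply/negP/negPn.
      by apply/existsP; exists a; rewrite aC sym eab.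
    by move/(C_notin uP); rewrite EP mem_head.
  have := cnt (leq_trans k1 kX); lia.
Qed.

Lemma lower (T : finType) (e : rel T) k :
  simple_graph e -> k_connected e k -> 1 <= k -> minn #|T| (3 * k + 2) <= dc e.
Proof.
  move=> sg kc k1.
  case: (pselect (exists u, forall p, detour e p -> u \notin p)) => [[u unc]|nex].
  - pose Pm := fun m => `[< exists p, detour e p /\ #|Cset e u p| = m >].
    have exP : exists m, Pm m.
      have [p dp] := detour_exists e u.
      by exists #|Cset e u p|; apply/asboolP; exists p.
    case: (ex_minnP exP) => m; rewrite /Pm => /asboolP [P [dP cm]] mn.
    have mP : minimal e u P.
      by split=> // P' dP'; rewrite cm; apply: mn; apply/asboolP; exists P'.
    have h := main_bound sg unc mP kc k1.
    apply: leq_trans (geq_minr _ _) _; apply: leq_trans h _.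
    have uP : uniq P by case: dP; rewrite gpathE => /andP [].
    have /card_uniqP <- := uP.
    rewrite /dc; apply: subset_leq_card; apply/subsetP => v vP; rewrite inE.
    by apply/asboolP; exists P.
  - apply: leq_trans (geq_minl _ _) _.
    rewrite /dc.
    have -> : [set v : T | `[< exists p, detour e p /\ v \in p >]] = setT.
      apply/setP => v; rewrite !inE; apply/asboolP.
      case: (pselect (exists p, detour e p /\ v \in p)) => // H; exfalso.
      apply: nex; exists v => p dp; apply/negP => vp; apply: H; by exists p.
    by rewrite cardsT.
Qed.

Definition kG (k n : nat) : rel 'I_n := fun i j =>
  (i != j) && [|| (i < k)%N, (j < k)%N |
     [&& (i < 3 * k + 2)%N, (j < 3 * k + 2)%N & ((i - k) %/ 2 == (j - k) %/ 2)%N]].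
Arguments kG : clear implicits.

Lemma kG_simple k n : simple_graph (kG k n).
Proof.
  split.
  - move=> i j; rewrite /kG -!val_eqE /=; apply/idP/idP; lia.
  - by move=> i; rewrite /kG eqxx.
Qed.

Lemma kG_E k n (i j : 'I_n) : kG k n i j =
  (nat_of_ord i != nat_of_ord j) && [|| (i < k)%N, (j < k)%N |
     [&& (i < 3 * k + 2)%N, (j < 3 * k + 2)%N & ((i - k) %/ 2 == (j - k) %/ 2)%N]].
Proof. by rewrite /kG -val_eqE. Qed.

Lemma kG_conn k n : 1 <= k -> k < n -> k_connected (kG k n) k.
Proof.
  move=> k1 kn; split; first by rewrite card_ord.
  move=> S cS x y xS yS.
  have [s /andP [sk sS]] : exists s : 'I_n, (s < k) && (s \notin S).
    case: (pselect (exists s : 'I_n, (s < k) && (s \notin S))) => // H; exfalso.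
    have : k <= #|S|.
      have le : k <= n by apply: ltnW.
      have inj : injective (widen_ord le).
        by move=> a b /(congr1 val) /= /val_inj.
      rewrite -[k in k <= _]card_ord -(card_imset _ inj).
      apply: subset_leq_card; apply/subsetP => _ /imsetP [i _ ->].
      apply/negPn/negP => ni; apply: H; exists (widen_ord le i).
      by rewrite /= ltn_ord ni.
    by rewrite leqNgt cS.
  have step : forall z, z \notin S -> connect (del_rel (kG k n) S) z s.
    move=> z zS; case: (z =P s) => [->|ne]; first exact: connect0.
    apply: connect1; rewrite /del_rel /= zS sS /kG sk orbT andbT.
    by rewrite !andbT; apply/eqP.
  apply: connect_trans (step _ xS) _.
  rewrite (sym_connect_sym _); first exact: step.
  move=> a b; rewrite /del_rel /=.
  by rewrite (proj1 (kG_simple k n) a b); case: (a \in S); case: (b \in S).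
Qed.

Lemma mk_ord n a : a < n -> exists o : 'I_n, nat_of_ord o = a.
Proof. by move=> H; exists (Ordinal H). Qed.

Lemma long_path k n t : 3 * k + 2 <= n -> t <= k ->
  exists h (q : seq 'I_n), [/\ path (kG k n) h q, uniq (h :: q), size q = 3 * t + 1,
    nat_of_ord (last h q) = k + 2 * t + 1 &
    forall i : 'I_n, (i \in h :: q) = (i < t) || ((k <= i) && (i < k + 2 * t + 2))].
Proof.
  move=> kn; elim: t => [|t IH] tk.
  - have [a va] := @mk_ord n k (ltac:(lia)).
    have [b vb] := @mk_ord n k.+1 (ltac:(lia)).
    exists a, [:: b]; split => //=.
    + rewrite kG_E /= va vb andbT; apply/andP; split; [lia | apply/orP; right; apply/orP; right; apply/and3P; split; lia].
    + by rewrite in_cons in_nil -val_eqE /= va vb; apply/andP; split => //; lia.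
    + by rewrite vb; lia.
    + by move=> i; rewrite !in_cons in_nil -!val_eqE /= va vb; apply/idP/idP; lia.
  - have [h [q [pq uq sq lq mq]]] := IH (ltnW tk).
    have [a va] := @mk_ord n t (ltac:(lia)).
    have [b vb] := @mk_ord n (k + 2 * t + 2) (ltac:(lia)).
    have [c vc] := @mk_ord n (k + 2 * t + 3) (ltac:(lia)).
    exists h, (q ++ [:: a; b; c]); split.
    + rewrite cat_path pq /= !kG_E /= lq va vb vc; lia.
    + rewrite -cat_cons cat_uniq uq /=.
      rewrite !mq !in_cons in_nil -!val_eqE /= va vb vc.
      apply/andP; split; first by apply/negP; lia.
      by rewrite ?in_nil; lia.
    + by rewrite size_cat sq /=; lia.
    + by rewrite last_cat /= vc; lia.
    + move=> i; rewrite -cat_cons mem_cat mq !in_cons in_nil -!val_eqE /= va vb vc.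
      by apply/idP/idP; lia.
Qed.

Local Notation cS k n p := (count (fun i : 'I_n => i < k) p).
Local Notation cN k n p := (count (fun i : 'I_n => ~~ (i < k)) p).
Local Notation hI k n p := (has (fun i : 'I_n => 3 * k + 2 <= i) p).

Lemma SB (k n : nat) : forall (p : seq 'I_n) (x : 'I_n), x < k -> path (kG k n) x p -> uniq (x :: p) ->
  cN k n (x :: p) <= 2 * cS k n (x :: p) /\ (hI k n (x :: p) -> (cN k n (x :: p)).+1 <= 2 * cS k n (x :: p)).
Proof.
  move=> p; move: (leqnn (size p)); move: {2}(size p) => N; elim: N p => [|N IH] p szp x.
    have -> : p = [::] by case: p szp.
    move=> xk _ _ /=; rewrite xk /=; split=> // H; exfalso; lia.
  move=> xk; case: p szp => [|y p] szp.
    move=> _ _ /=; rewrite xk /=; split=> // H; exfalso; lia.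
  rewrite [path _ _ _]/= => /andP [exy pyp] uq.
  have uyp : uniq (y :: p) by move: uq; rewrite cons_uniq => /andP [].
  case yk : (y < k).
    have [IH1 IH2] := IH p (ltac:(rewrite /= in szp; lia)) y yk pyp uyp.
    move: IH1 IH2; rewrite /= xk yk /= => IH1 IH2; split; first lia.
    move=> /orP [H|H]; first (exfalso; lia).
    have := IH2 H; lia.
  case: p szp pyp uyp uq => [|z p] szp pyp uyp uq.
    rewrite /= xk yk /=; split=> // H; lia.
  move: pyp; rewrite [path _ _ _]/= => /andP [eyz pzp].
  have uzp : uniq (z :: p) by move: uyp; rewrite cons_uniq => /andP [].
  have eyz' := eyz; rewrite kG_E in eyz'.
  case zk : (z < k).
    have [IH1 IH2] := IH p (ltac:(rewrite /= in szp; lia)) z zk pzp uzp.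
    move: IH1 IH2; rewrite /= xk yk zk /= => IH1 IH2; split; first lia.
    move=> _; lia.
  case: p szp pzp uzp uyp uq => [|w p] szp pzp uzp uyp uq.
    rewrite /= xk yk zk /=; split=> // H; exfalso; lia.
  move: pzp; rewrite [path _ _ _]/= => /andP [ezw pwp].
  have uwp : uniq (w :: p) by move: uzp; rewrite cons_uniq => /andP [].
  have ezw' := ezw; rewrite kG_E in ezw'.
  case wk : (w < k); last first.
    exfalso; move: uq; rewrite /= !in_cons => /andP [_ /andP [/norP [_ /norP [yw _]] _]].
    move: yw; rewrite -val_eqE /= => yw; lia.
  have [IH1 IH2] := IH p (ltac:(rewrite /= in szp; lia)) w wk pwp uwp.
  move: IH1 IH2; rewrite /= xk yk zk wk /= => IH1 IH2; split; first lia.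
  move=> /orP [H|/orP [H|/orP [H|H]]]; try (exfalso; lia).
  have := IH2 H; lia.
Qed.

Lemma GB (k n : nat) (p : seq 'I_n) : sorted (kG k n) p -> uniq p ->
  cN k n p <= 2 * cS k n p + 2 /\ (hI k n p -> cN k n p <= 2 * cS k n p + 1).
Proof.
  case: p => [|x p] //= pxp uq.
  case xk : (x < k).
    have [S1 S2] := SB xk pxp uq.
    move: S1 S2; rewrite /= ?xk /= => S1 S2; split; first lia.
    by move=> H; have := S2 H; lia.
  case: p pxp uq => [|y p] pxp uq.
    by rewrite /= ?xk /=; split => //; lia.
  move: pxp; rewrite [path _ _ _]/= => /andP [exy pyp].
  have uyp : uniq (y :: p) by move: uq; rewrite cons_uniq => /andP [].
  have exy' := exy; rewrite kG_E in exy'.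
  case yk : (y < k).
    have [S1 S2] := SB yk pyp uyp.
    move: S1 S2; rewrite /= ?xk ?yk /= => S1 S2; split; first lia.
    move=> /orP [H|H]; first lia.
    have := S2 H; lia.
  case: p pyp uyp uq => [|z p] pyp uyp uq.
    rewrite /= ?xk ?yk /=; split=> // H; exfalso; lia.
  move: pyp; rewrite [path _ _ _]/= => /andP [eyz pzp].
  have uzp : uniq (z :: p) by move: uyp; rewrite cons_uniq => /andP [].
  have eyz' := eyz; rewrite kG_E in eyz'.
  case zk : (z < k); last first.
    exfalso; move: uq; rewrite /= !in_cons => /andP [/norP [_ /norP [xz _]] _].
    move: xz; rewrite -val_eqE /= => xz; lia.
  have [S1 S2] := SB zk pzp uzp.
  move: S1 S2; rewrite /= ?xk ?yk ?zk /= => S1 S2; split; first lia.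
  move=> /orP [H|/orP [H|H]]; try (exfalso; lia).
  have := S2 H; lia.
Qed.


Lemma cS_le k n (P : seq 'I_n) : k <= n -> uniq P -> count (fun i : 'I_n => i < k) P <= k.
Proof.
  move=> kn uP; rewrite -size_filter.
  have /card_uniqP <- := filter_uniq (fun i : 'I_n => i < k) uP.
  apply: leq_trans (_ : #|[set widen_ord kn i | i : 'I_k]| <= k).
    apply: subset_leq_card; apply/subsetP => i; rewrite mem_filter => /andP [ik _].
    apply/imsetP; exists (Ordinal ik) => //; exact: val_inj.
  by apply: leq_trans (leq_imset_card _ _) _; rewrite card_ord.
Qed.

Lemma kG_upper k n : 1 <= k -> 3 * k + 2 <= n -> dc (kG k n) <= 3 * k + 2.
Proof.
  move=> k1 kn.
  have [h [q [pq uq sq _ _]]] := long_path kn (leqnn k).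
  have glong : is_gpath (kG k n) (h :: q) by rewrite /is_gpath pq uq.
  have cov : forall P v, detour (kG k n) P -> v \in P -> v < 3 * k + 2.
    move=> P v [gP mx] vP; rewrite ltnNge; apply/negP => vI.
    have := mx _ glong; rewrite /= sq => szP.
    move: gP; rewrite gpathE => /andP [/andP [_ sP] uP].
    have [G1 G2] := GB sP uP.
    have hI : has (fun i : 'I_n => 3 * k + 2 <= i) P by apply/hasP; exists v.
    have G3 := G2 hI.
    have sz : size P = count (fun i : 'I_n => i < k) P + count (fun i : 'I_n => ~~ (i < k)) P
      := esym (count_predC _ _).
    have := cS_le (ltac:(lia) : k <= n) uP.
    move=> X; set a := count (fun i : 'I_n => i < k) P in X sz G3; set b := count (fun i : 'I_n => ~~ (i < k)) P in sz G3; set L := size P in szP sz; lia.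
  have le3 : 3 * k + 2 <= n := kn.
  rewrite /dc; apply: leq_trans (_ : #|[set widen_ord le3 i | i : 'I_(3 * k + 2)]| <= _).
    apply: subset_leq_card; apply/subsetP => v; rewrite inE => /asboolP [P [dP vP]].
    have vl := cov P v dP vP.
    apply/imsetP; exists (Ordinal vl) => //; exact: val_inj.
  by apply: leq_trans (leq_imset_card _ _) _; rewrite card_ord.
Qed.

Theorem theorem8 (k n : nat) :
  1 <= k -> k.+1 <= n ->
  (forall (T : finType) (e : rel T),
      simple_graph e -> #|T| = n -> k_connected e k ->
      minn n (3 * k + 2) <= dc e) /\
  (exists e : rel 'I_n,
      simple_graph e /\ k_connected e k /\ dc e = minn n (3 * k + 2)).
Proof.
  move=> k1 kn; split.
    by move=> T e sg cT kc; rewrite -cT; exact: (lower sg kc k1).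
  exists (kG k n); split; first exact: kG_simple.
  have kc := kG_conn k1 kn.
  split=> //; apply/eqP; rewrite eqn_leq.
  have lo := lower (kG_simple k n) kc k1; rewrite card_ord in lo; rewrite lo andbT.
  case: (leqP n (3 * k + 2)) => h.
    apply: leq_trans (max_card _) _; by rewrite card_ord.
  exact: (kG_upper k1 (ltnW h)).
Qed.
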